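(* Let $M$ be a multiplication $L$-module and $\delta_1(A)=(\sqrt{(A:I_M)})I_M$. Then for every proper element $N\in M$, $N\leqslant\delta_1\big((N:I_M)N\big)$, and equality holds if $N$ is prime.
   Context: $L$ is a multiplicative lattice (complete lattice with commutative, associative multiplication distributing over arbitrary joins, identity $1$), compactly generated, $1$ compact, finite products of compact elements compact; $L_\ast$ = compact elements. An $L$-module is a complete lattice $M$ (least $O_M$, greatest $I_M$) with product $aB\in M$ satisfying $(\bigvee a_\alpha)A=\bigvee(a_\alpha A)$, $a(\bigvee A_\alpha)=\bigvee(aA_\alpha)$, $(ab)A=a(bA)$, $1A=A$, $0A=O_M$. $(A:B)=\bigvee\{x\in L:xB\leqslant A\}$; $\sqrt a=\bigvee\{x\in L_\ast:x^n\leqslant a\text{ for some }n\in\mathbb Z_+\}$. $M$ is a multiplication module if every element of $M$ is $aI_M$ for some $a\in L$. Proper means $<I_M$. A proper $N\in M$ is prime if $aX\leqslant N$ ($a\in L$, $X\in M$) implies $X\leqslant N$ or $aI_M\leqslant N$. *)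

(* Defs.v *)
From Stdlib Require Import List.

Record mlattice := MLattice {
  mcar :> Type;
  mle : mcar -> mcar -> Prop;
  msup : (mcar -> Prop) -> mcar;
  mmul : mcar -> mcar -> mcar;
  mone : mcar;
  mle_refl : forall x, mle x x;
  mle_trans : forall x y z, mle x y -> mle y z -> mle x z;
  mle_antisym : forall x y, mle x y -> mle y x -> x = y;
  msup_ub : forall (S : mcar -> Prop) x, S x -> mle x (msup S);
  msup_least : forall (S : mcar -> Prop) u, (forall x, S x -> mle x u) -> mle (msup S) u;
  mmulC : forall a b, mmul a b = mmul b a;
  mmulA : forall a b c, mmul a (mmul b c) = mmul (mmul a b) c;
  mmul1 : forall a, mmul mone a = a;
  mmul_sup : forall a (S : mcar -> Prop),
      mmul a (msup S) = msup (fun y => exists x, S x /\ y = mmul a x)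
}.

Arguments mle {_}.
Arguments msup {_}.
Arguments mmul {_}.
Arguments mone {_}.

Definition compact {L : mlattice} (c : L) : Prop :=
  forall S : L -> Prop, mle c (msup S) ->
    exists l : list L, (forall x, In x l -> S x) /\ mle c (msup (fun x => In x l)).

Definition good_mlattice (L : mlattice) : Prop :=
  (forall a : L, a = msup (fun c => compact c /\ mle c a)) /\
  compact (@mone L) /\
  (forall a b : L, compact a -> compact b -> compact (mmul a b)).

Fixpoint mpow {L : mlattice} (x : L) (n : nat) : L :=
  match n with 0 => mone | S k => mmul x (mpow x k) end.

Definition mrad {L : mlattice} (a : L) : L :=
  msup (fun x => compact x /\ exists n, 1 <= n /\ mle (mpow x n) a).

Record lmodule (L : mlattice) := LModule {
  dcar :> Type;
  dle : dcar -> dcar -> Prop;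
  dsup : (dcar -> Prop) -> dcar;
  dact : L -> dcar -> dcar;
  dle_refl : forall x, dle x x;
  dle_trans : forall x y z, dle x y -> dle y z -> dle x z;
  dle_antisym : forall x y, dle x y -> dle y x -> x = y;
  dsup_ub : forall (S : dcar -> Prop) x, S x -> dle x (dsup S);
  dsup_least : forall (S : dcar -> Prop) u, (forall x, S x -> dle x u) -> dle (dsup S) u;
  dact_supl : forall (S : L -> Prop) A,
      dact (msup S) A = dsup (fun Y => exists a, S a /\ Y = dact a A);
  dact_supr : forall a (S : dcar -> Prop),
      dact a (dsup S) = dsup (fun Y => exists X, S X /\ Y = dact a X);
  dact_mul : forall a b A, dact (mmul a b) A = dact a (dact b A);
  dact1 : forall A, dact mone A = A;
  dact0 : forall A, dact (msup (fun _ => False)) A = dsup (fun _ => False)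
}.

Arguments dle {_ _}.
Arguments dsup {_ _}.
Arguments dact {_ _}.

Definition dtop {L} {M : lmodule L} : M := dsup (fun _ => True).

Definition colon {L} {M : lmodule L} (A B : M) : L :=
  msup (fun x => dle (dact x B) A).

Definition multiplication_module {L} (M : lmodule L) : Prop :=
  forall N : M, exists a : L, N = dact a dtop.

Definition proper {L} {M : lmodule L} (N : M) : Prop :=
  dle N dtop /\ N <> dtop.

Definition prime_elt {L} {M : lmodule L} (N : M) : Prop :=
  proper N /\
  forall (a : L) (X : M), dle (dact a X) N -> dle X N \/ dle (dact a dtop) N.

Definition delta1 {L} {M : lmodule L} (A : M) : M :=
  dact (mrad (colon A dtop)) dtop.

(* Main.v *)
Require Import Defs.
From Stdlib Require Import List.

Section H.
Variable L : mlattice.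
Variable M : lmodule L.

Lemma sup2 (a b : L) : mle a b -> b = msup (fun y => y = a \/ y = b).
Proof.
  intro h. apply mle_antisym.
  - apply msup_ub; auto.
  - apply msup_least. intros x [->| ->]; auto. apply mle_refl.
Qed.

Lemma dsup2 (A B : M) : dle A B -> B = dsup (fun y => y = A \/ y = B).
Proof.
  intro h. apply dle_antisym.
  - apply dsup_ub; auto.
  - apply dsup_least. intros x [->| ->]; auto. apply dle_refl.
Qed.

Lemma mul_mono (c a b : L) : mle a b -> mle (mmul c a) (mmul c b).
Proof.
  intro h. rewrite (sup2 a b h). rewrite mmul_sup.
  apply msup_ub. exists a; auto.
Qed.

Lemma actL (a b : L) (A : M) : mle a b -> dle (dact a A) (dact b A).
Proof.
  intro h. rewrite (sup2 a b h). rewrite dact_supl.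
  apply dsup_ub. exists a; auto.
Qed.

Lemma actR (a : L) (A B : M) : dle A B -> dle (dact a A) (dact a B).
Proof.
  intro h. rewrite (dsup2 A B h). rewrite dact_supr.
  apply dsup_ub. exists A; auto.
Qed.

Lemma colon_ub (A B : M) : dle (dact (colon A B) B) A.
Proof.
  unfold colon. rewrite dact_supl. apply dsup_least.
  intros Y [x [h ->]]. exact h.
Qed.

Lemma colon_ge (x : L) (A B : M) : dle (dact x B) A -> mle x (colon A B).
Proof. intro h. unfold colon. apply msup_ub. exact h. Qed.

Lemma dle_top (X : M) : dle X dtop.
Proof. unfold dtop. apply dsup_ub. exact I. Qed.

End H.

Theorem theorem3p20 (L : mlattice) (HL : good_mlattice L) (M : lmodule L)
  (HM : multiplication_module M) (N : M) (HN : proper N) :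
  dle N (delta1 (dact (colon N dtop) N)) /\
  (prime_elt N -> N = delta1 (dact (colon N dtop) N)).
Proof.
  set (a := colon N dtop).
  assert (HaI : dle (dact a dtop) N) by apply colon_ub.
  assert (Part1 : dle N (delta1 (dact a N))).
  { destruct (HM N) as [b Hb].
    assert (Hba : mle b a).
    { apply colon_ge. rewrite <- Hb. apply dle_refl. }
    unfold delta1.
    apply dle_trans with (dact a dtop).
    - rewrite Hb at 1. apply actL. exact Hba.
    - apply actL. destruct HL as [Hc _].
      rewrite (Hc a) at 1. apply msup_least. intros x [Hx Hxa].
      unfold mrad. apply msup_ub. split; [exact Hx|].
      exists 2. split; [auto|]. simpl. rewrite (mmulC _ x mone), mmul1.
      apply colon_ge. rewrite dact_mul.
      apply dle_trans with (dact x N).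
      + apply actR. apply dle_trans with (dact a dtop); [|exact HaI]. apply actL; exact Hxa.
      + apply actL; exact Hxa. }
  split; [exact Part1|].
  intros [_ Hp]. apply dle_antisym; [exact Part1|].
  unfold delta1, mrad. rewrite dact_supl. apply dsup_least.
  intros Y [x [[_ [n [Hn Hxn]]] ->]].
  assert (Hxn' : dle (dact (mpow x n) dtop) N).
  { apply dle_trans with (dact (colon (dact a N) dtop) dtop).
    - apply actL. exact Hxn.
    - apply dle_trans with (dact a N). apply colon_ub.
      apply dle_trans with (dact a dtop); [|exact HaI]. apply actR, dle_top. }
  clear Hxn. induction n as [|n IH]; [inversion Hn|].
  simpl in Hxn'. rewrite dact_mul in Hxn'.
  destruct (Hp x _ Hxn') as [H|H]; [|exact H].
  destruct n as [|n].
  - simpl in H. rewrite dact1 in H. eapply dle_trans; [apply dle_top|exact H].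
  - apply IH; [apply le_n_S, le_0_n|exact H].
Qed.
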